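(* Let $k\geq 2$ be an integer. For every finite simple graph $G$ of order $n$ and size $m$ with minimum degree $\delta(G)\geq k$, $$\gamma_{\times k}(G)\geq \frac{(\delta(G)+k)\,n-2m}{\delta(G)+1}.$$
   Context: All graphs are finite and simple, with vertex set $V(G)$; order is the number of vertices and size the number of edges. For $v\in V(G)$ and $D\subseteq V(G)$, $\deg_D(v)$ is the number of neighbours of $v$ in $D$. $\delta(G)$ denotes the minimum degree. For a positive integer $k\leq \delta(G)+1$, a $k$-tuple dominating set of $G$ is a set $D\subseteq V(G)$ such that $\deg_D(v)\geq k$ for every $v\in V(G)\setminus D$ and $\deg_D(v)\geq k-1$ for every $v\in D$; the $k$-tuple domination number $\gamma_{\times k}(G)$ is the minimum cardinality of a $k$-tuple dominating set. *)

(* Defs.v *)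
From mathcomp Require Import all_boot all_order all_algebra.
Set Implicit Arguments. Unset Strict Implicit. Unset Printing Implicit Defensive.

Definition simple_graph (T : finType) (e : rel T) : Prop :=
  symmetric e /\ irreflexive e.

Definition nbhd (T : finType) (e : rel T) (v : T) : {set T} := [set u | e v u].
Definition deg (T : finType) (e : rel T) (v : T) : nat := #|nbhd e v|.
Definition deg_in (T : finType) (e : rel T) (D : {set T}) (v : T) : nat :=
  #|nbhd e v :&: D|.

(* minimum degree (the default #|T| is never attained on a nonempty simple
   graph, since degrees are < #|T|) *)
Definition min_deg (T : finType) (e : rel T) : nat :=
  \big[minn/#|T|]_(v : T) deg e v.

Definition g_order (T : finType) : nat := #|T|.
Definition edge_set (T : finType) (e : rel T) : {set {set T}} :=
  [set E : {set T} | [exists u, exists v, (e u v) && (E == [set u; v])]].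
Definition size_g (T : finType) (e : rel T) : nat := #|edge_set e|.

Definition ktuple_dom (T : finType) (e : rel T) (k : nat) (D : {set T}) : bool :=
  [forall v, if v \in D then k.-1 <= deg_in e D v else k <= deg_in e D v].

(* k-tuple domination number: minimum cardinality of a k-tuple dominating
   set (the whole vertex set is one whenever k <= delta + 1) *)
Definition ktuple_dom_num (T : finType) (e : rel T) (k : nat) : nat :=
  \big[minn/#|T|]_(D : {set T} | ktuple_dom e k D) #|D|.

(* Main.v *)
Require Import Defs.
From mathcomp Require Import all_boot all_order all_algebra.
From mathcomp Require Import zify.
Import Order.TTheory GRing.Theory Num.Theory.

Lemma card_ind (U : finType) (A : {set U}) : #|A| = \sum_u (u \in A : nat).
Proof. by rewrite -sum1_card big_mkcond /=; apply: eq_bigr => u _; case: (u \in A). Qed.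

Section S.
Variables (T : finType) (e : rel T).
Hypothesis se : symmetric e.
Hypothesis ie : irreflexive e.


Lemma deg_split D v : deg e v = deg_in e D v + deg_in e (~:D) v.
Proof. by rewrite /deg_in -setDE cardsID. Qed.

Lemma sum_degC D : \sum_v deg_in e (~:D) v = \sum_(u | u \notin D) deg e u.
Proof.
rewrite /deg_in /deg.
under eq_bigr do rewrite card_ind.
rewrite exchange_big /= [RHS]big_mkcond /=; apply: eq_bigr => u _.
rewrite card_ind; case: ifP => uD.
  by apply: eq_bigr => v _; rewrite !inE uD andbT se.
by rewrite big1 // => v _; rewrite !inE uD andbF.
Qed.

Lemma card_edges_at v :
  #|[set E in edge_set e | v \in E]| = deg e v.
Proof.
have -> : [set E in edge_set e | v \in E] = (fun u => [set v; u]) @: nbhd e v.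
  apply/setP => E; rewrite !inE; apply/andP/imsetP.
  - case=> /existsP[a /existsP[b /andP[eab /eqP ->]]].
    rewrite !inE; case/orP => /eqP vE.
      by exists b; rewrite ?inE vE.
    by exists a; rewrite ?inE vE 1?se // setUC.
  - case=> u; rewrite inE => evu ->; split; last by rewrite !inE eqxx.
    by apply/existsP; exists v; apply/existsP; exists u; rewrite evu eqxx.
rewrite card_in_imset // => u w; rewrite !inE => evu evw /setP /(_ u).
rewrite !inE eqxx orbT => /esym/orP[/eqP uv|/eqP //].
by move: evu; rewrite uv ie.
Qed.

Lemma handshake : 2 * size_g e = \sum_v deg e v.
Proof.
rewrite /size_g.
under [RHS]eq_bigr do rewrite -card_edges_at card_ind.
rewrite exchange_big /= -sum1_card big_distrr /= big_mkcond /=.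
apply: eq_bigr => E _; case: ifP => EE; last first.
  by rewrite big1 // => v _; rewrite inE EE.
move: (EE); rewrite inE => /existsP[a /existsP[b /andP[eab /eqP EE']]].
rewrite muln1.
under eq_bigr do rewrite inE EE /=.
rewrite -card_ind EE' cards2.
by case: eqP => // ab; move: eab; rewrite ab ie.
Qed.

Lemma min_deg_le v : min_deg e <= deg e v.
Proof.
rewrite /min_deg; have : v \in index_enum T by rewrite mem_index_enum.
elim: (index_enum T) => [//|x r IH]; rewrite inE big_cons => /orP[/eqP->|/IH h].
  by rewrite geq_minl.
by rewrite geq_min h orbT.
Qed.

Lemma key k D : 0 < k -> ktuple_dom e k D ->
  (k + min_deg e) * #|T| <= 2 * size_g e + (min_deg e).+1 * #|D|.
Proof.
move=> k0 /forallP Dd.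
rewrite handshake.
under eq_bigr do rewrite (deg_split D).
rewrite big_split /= sum_degC.
have h1 : \sum_v (k.-1 + (v \in ~: D)) <= \sum_v deg_in e D v.
  apply: leq_sum => v _; have := Dd v; rewrite inE.
  by case: (v \in D) => /=; rewrite ?addn0 ?addn1 // prednK.
have h2 : \sum_(v in ~: D) min_deg e <= \sum_(v | v \notin D) deg e v.
  rewrite big_mkcond [X in _ <= X]big_mkcond /=.
  by apply: leq_sum => v _; rewrite inE; case: ifP => // _; apply: min_deg_le.
rewrite big_split /= sum_nat_const -card_ind in h1.
rewrite sum_nat_const in h2.
have cT : #|(xpredT : pred T)| = #|T| by apply: eq_card.
rewrite cT in h1.
have cC := cardsC D.
have kk : k = k.-1.+1 by rewrite prednK.
rewrite -cC.
have {}kk : k.-1 = k - 1 by lia.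
rewrite kk in h1.
nia.
Qed.
End S.

Local Open Scope ring_scope.
Theorem mainTheorem4 (k : nat) (T : finType) (e : rel T) :
  (2 <= k)%N -> simple_graph e -> (k <= min_deg e)%N ->
  (((min_deg e + k)%:R * (g_order T)%:R - 2 * (size_g e)%:R) / (min_deg e).+1%:R : rat)
    <= (ktuple_dom_num e k)%:R.
Proof.
move=> k2 [se ie] kd.
have Pk : forall x, ktuple_dom_num e k = x -> ((min_deg e + k) * #|T| <= 2 * size_g e + (min_deg e).+1 * x)%N.
  move=> x <-; rewrite /ktuple_dom_num.
  apply: (big_ind (fun y => (min_deg e + k) * #|T| <= 2 * size_g e + (min_deg e).+1 * y)%N).
  - have := @key T e se ie k setT (ltnW k2).
    rewrite cardsT addnC; apply.
    apply/forallP => v; rewrite inE /deg_in setIT.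
    have := @min_deg_le T e v; rewrite /deg; lia.
  - move=> x1 x2 h1 h2; rewrite /minn; case: ifP => //.
  - move=> D HD; rewrite addnC; exact: key (ltnW k2) HD.
have := Pk _ erefl.
rewrite ler_pdivrMr ?ltr0n // => H.
rewrite /g_order lerBlDr.
have : ((min_deg e + k) * #|T| <= ktuple_dom_num e k * (min_deg e).+1 + 2 * size_g e)%N by lia.
by rewrite -(ler_nat rat) natrD !natrM.
Qed.
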